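(* Let $n=p_1^{\alpha_1}\cdots p_r^{\alpha_r}$ be the canonical factorization of $n$ into distinct primes and let $d=p_1^{\beta_1}\cdots p_r^{\beta_r}$ be a square-free divisor of $n$ ($0\le\beta_\ell\le1$ for all $\ell$). Then for every $z\in\mathbb{C}$, $$\sum_{k\mid n}\frac{1}{|c_d(k)|^z}=\prod_{\ell=1}^r\Big(1+\frac{\alpha_\ell}{(p_\ell-1)^{\beta_\ell z}}\Big).$$
   Context: For integers $m\ge1$ and $x$, $c_m(x)=\sum_{1\le j\le m,\ (j,m)=1}e^{2\pi ijx/m}$ is the Ramanujan sum (for square-free $d$ it is a nonzero integer at every divisor $k$ of $n$); for a positive real $a$, $a^z=e^{z\log a}$ with the real logarithm; the sum is over positive divisors $k$ of $n$. *)

(* Defs.v *)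
From Stdlib Require Import Reals Arith List ZArith Znumtheory.
From Coquelicot Require Import Coquelicot.
Import ListNotations.
Open Scope R_scope.

Definition cexpi (theta : R) : C := (cos theta, sin theta).

(* a^z = e^{z log a} for a positive real a (real logarithm), z complex:
   e^{(x+iy) L} = e^{xL} (cos (yL) + i sin (yL)). *)
Definition cpow (a : R) (z : C) : C :=
  let L := ln a in
  (exp (Re z * L) * cos (Im z * L), exp (Re z * L) * sin (Im z * L)).

Definition Csum (l : list C) : C := fold_right Cplus (RtoC 0) l.
Definition Cprod (l : list C) : C := fold_right Cmult (RtoC 1) l.

Definition ramanujan_sum (m : nat) (x : Z) : C :=
  Csum (map (fun j => cexpi (2 * PI * IZR (Z.of_nat j * x) / INR m))
            (filter (fun j => Nat.eqb (Nat.gcd j m) 1) (seq 1 m))).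

Definition divisors_list (n : nat) : list nat :=
  filter (fun k => Nat.eqb (n mod k) 0) (seq 1 n).

Definition nprod (l : list nat) : nat := fold_right Nat.mul 1%nat l.

(* Main.v *)
Require Import Defs.
From Stdlib Require Import Reals Arith List ZArith Znumtheory Lia Lra Permutation.
From Coquelicot Require Import Coquelicot.
Open Scope R_scope.
Open Scope R_scope.

Lemma Csum_app l1 l2 : Csum (l1 ++ l2) = Cplus (Csum l1) (Csum l2).
Proof. induction l1 as [|a l IH]; simpl. - ring. - rewrite IH. ring. Qed.

Lemma Csum_ext {A} (f g : A -> C) l :
  (forall x, In x l -> f x = g x) -> Csum (map f l) = Csum (map g l).
Proof. intros H. f_equal. apply map_ext_in. exact H. Qed.

Lemma Csum_plus {A} (f g : A -> C) l :
  Csum (map (fun x => Cplus (f x) (g x)) l) = Cplus (Csum (map f l)) (Csum (map g l)).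
Proof. induction l as [|a l IH]; simpl. - ring. - rewrite IH. ring. Qed.

Lemma Csum_minus {A} (f g : A -> C) l :
  Csum (map (fun x => Cminus (f x) (g x)) l) = Cminus (Csum (map f l)) (Csum (map g l)).
Proof. induction l as [|a l IH]; simpl. - ring. - rewrite IH. ring. Qed.

Lemma Csum_scal {A} (c : C) (f : A -> C) l :
  Csum (map (fun x => Cmult c (f x)) l) = Cmult c (Csum (map f l)).
Proof. induction l as [|a l IH]; simpl. - ring. - rewrite IH. ring. Qed.

Lemma Csum_zero {A} (l : list A) : Csum (map (fun _ => RtoC 0) l) = RtoC 0.
Proof. induction l as [|a l IH]; simpl. - ring. - rewrite IH. ring. Qed.

Lemma Csum_const {A} (c : C) (l : list A) :
  Csum (map (fun _ => c) l) = Cmult (RtoC (INR (length l))) c.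
Proof. induction l as [|a l IH]; simpl length. - simpl. ring.
  - simpl map. simpl Csum. rewrite IH. rewrite S_INR. rewrite RtoC_plus. ring. Qed.

Lemma Csum_filter {A} (P : A -> bool) (f : A -> C) l :
  Csum (map f (filter P l)) = Csum (map (fun x => if P x then f x else RtoC 0) l).
Proof. induction l as [|a l IH]; simpl. - reflexivity.
  - destruct (P a); simpl; rewrite IH; try ring. Qed.

Lemma Csum_perm {A} (f : A -> C) l1 l2 :
  Permutation l1 l2 -> Csum (map f l1) = Csum (map f l2).
Proof. intros H. induction H; simpl; try reflexivity.
  - rewrite IHPermutation. reflexivity.
  - ring.
  - congruence. Qed.

Lemma Csum_swap {A B} (F : A -> B -> C) l1 l2 :
  Csum (map (fun a => Csum (map (fun b => F a b) l2)) l1)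
  = Csum (map (fun b => Csum (map (fun a => F a b) l1)) l2).
Proof. induction l1 as [|a l IH]; simpl.
  - symmetry. apply Csum_zero.
  - rewrite IH. rewrite <- Csum_plus. reflexivity. Qed.

Lemma Csum_flat_map {A B} (f : B -> C) (g : A -> list B) l :
  Csum (map f (flat_map g l)) = Csum (map (fun a => Csum (map f (g a))) l).
Proof. induction l as [|a l IH]; simpl. - reflexivity.
  - rewrite map_app, Csum_app, IH. reflexivity. Qed.

Lemma Cprod_mult {A} (f g : A -> C) l :
  Cprod (map (fun x => Cmult (f x) (g x)) l) = Cmult (Cprod (map f l)) (Cprod (map g l)).
Proof. induction l as [|a l IH]; simpl. - ring. - rewrite IH. ring. Qed.

Lemma Cprod_ext {A} (f g : A -> C) l :
  (forall x, In x l -> f x = g x) -> Cprod (map f l) = Cprod (map g l).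
Proof. intros H. f_equal. apply map_ext_in. exact H. Qed.
Open Scope R_scope.

Definition E (x : R) : C := cexpi (2 * PI * x).

Lemma E_add x y : E (x + y) = Cmult (E x) (E y).
Proof. unfold E, cexpi, Cmult. simpl.
  replace (2 * PI * (x + y)) with (2*PI*x + 2*PI*y) by ring.
  rewrite cos_plus, sin_plus. f_equal; ring. Qed.

Lemma E_int x n : E (x + INR n) = E x.
Proof. unfold E, cexpi.
  replace (2 * PI * (x + INR n)) with (2*PI*x + 2 * INR n * PI) by ring.
  rewrite cos_period, sin_period. reflexivity. Qed.

Lemma E_0 : E 0 = RtoC 1.
Proof. unfold E, cexpi. rewrite Rmult_0_r, cos_0, sin_0. reflexivity. Qed.

Lemma E_one_int a : E a = RtoC 1 -> exists j : Z, a = IZR j.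
Proof. unfold E, cexpi. intros H. injection H as H1 H2.
  replace (2 * PI * a) with (2 * (PI * a)) in H1 by ring.
  rewrite cos_2a_sin in H1.
  assert (sin (PI * a) = 0) by nra.
  destruct (sin_eq_0_0 _ H) as [j Hj]. exists j.
  assert (PI > 0) by apply PI_RGT_0. nra. Qed.

Lemma tele (f : nat -> C) q :
  Csum (map (fun t => Cminus (f t) (f (S t))) (seq 0 q)) = Cminus (f 0%nat) (f q).
Proof. induction q as [|q IH].
  - simpl. ring.
  - rewrite seq_S, map_app, Csum_app, IH. simpl. ring. Qed.

Lemma E_geom x q k : (1 <= q)%nat ->
  Csum (map (fun t => E (x + INR t * INR k / INR q)) (seq 0 q))
  = if Nat.eqb (k mod q) 0 then Cmult (RtoC (INR q)) (E x) else RtoC 0.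
Proof. intros Hq.
  assert (Hq' : INR q <> 0) by (apply not_0_INR; lia).
  destruct (Nat.eqb (k mod q) 0) eqn:Hm.
  - apply Nat.eqb_eq in Hm. apply Nat.mod_divide in Hm; [|lia]. destruct Hm as [c ->].
    rewrite <- (length_seq q 0) at 2. rewrite <- Csum_const.
    apply Csum_ext. intros t _. rewrite mult_INR.
    replace (x + INR t * (INR c * INR q) / INR q) with (x + INR (t * c)).
    + apply E_int.
    + rewrite mult_INR. field. exact Hq'.
  - set (a := INR k / INR q).
    assert (Ha : E a <> RtoC 1).
    { intros He. destruct (E_one_int _ He) as [j Hj].
      assert (HK : INR k = IZR j * INR q) by (unfold a in Hj; rewrite <- Hj; field; exact Hq').
      rewrite !INR_IZR_INZ, <- mult_IZR in HK. apply eq_IZR in HK.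
      apply Nat.eqb_neq in Hm. apply Hm.
      apply Nat2Z.inj. rewrite Nat2Z.inj_mod, HK. simpl. rewrite Z_mod_mult. reflexivity. }
    set (Sm := Csum _).
    assert (H : Cmult (Cminus (RtoC 1) (E a)) Sm = RtoC 0).
    { unfold Sm. rewrite <- Csum_scal.
      rewrite (Csum_ext _ (fun t => Cminus (E (x + INR t * a)) (E (x + INR (S t) * a)))).
      - rewrite tele. simpl INR. rewrite Rmult_0_l, Rplus_0_r.
        replace (x + INR q * a) with (x + INR k) by (unfold a; field; exact Hq').
        rewrite E_int. ring.
      - intros t _. rewrite S_INR.
        replace (x + (INR t + 1) * a) with ((x + INR t * a) + a) by ring.
        replace (x + INR t * INR k / INR q) with (x + INR t * a) by (unfold a; field; exact Hq').
        rewrite (E_add (x + INR t * a) a). ring. }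
    assert (Hn : Cminus (RtoC 1) (E a) <> RtoC 0).
    { intros H0. apply Ha. replace (E a) with (Cminus (RtoC 1) (Cminus (RtoC 1) (E a))) by ring.
      rewrite H0. ring. }
    replace Sm with (Cmult (Cinv (Cminus (RtoC 1) (E a))) (Cmult (Cminus (RtoC 1) (E a)) Sm)).
    + rewrite H. ring.
    + rewrite Cmult_assoc, Cinv_l; [ring|exact Hn].
Qed.
Open Scope nat_scope.

Definition nprime (p : nat) := prime (Z.of_nat p).

Lemma Zdiv_nat a b : Nat.divide a b <-> (Z.of_nat a | Z.of_nat b)%Z.
Proof. split.
  - intros [c ->]. exists (Z.of_nat c). lia.
  - intros [c Hc]. destruct (Nat.eq_dec a 0) as [->|Ha].
    + simpl in Hc. rewrite Z.mul_0_r in Hc. exists 0. lia.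
    + assert (0 <= c)%Z by nia. exists (Z.to_nat c). nia. Qed.

Lemma nprime_ge2 p : nprime p -> 2 <= p.
Proof. intros [H _]. lia. Qed.

Lemma nprime_mult p a b : nprime p -> Nat.divide p (a*b) -> Nat.divide p a \/ Nat.divide p b.
Proof. intros Hp H. apply Zdiv_nat in H. rewrite Nat2Z.inj_mul in H.
  destruct (prime_mult _ Hp _ _ H); [left|right]; apply Zdiv_nat; auto. Qed.

Lemma nprime_div_prime p q : nprime p -> nprime q -> Nat.divide q p -> q = p.
Proof. intros Hp Hq H. apply Zdiv_nat in H. apply prime_div_prime in H; auto. lia. Qed.

Lemma nprime_coprime p a : nprime p -> ~ Nat.divide p a -> Nat.gcd p a = 1.
Proof. intros Hp Hn. pose proof (Nat.gcd_divide_l p a) as H1.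
  pose proof (Nat.gcd_divide_r p a) as H2.
  pose proof (nprime_ge2 _ Hp) as Hp2. apply Zdiv_nat in H1. destruct (prime_divisors _ Hp _ H1) as [H|[H|[H|H]]]; try lia.
  exfalso. apply Hn. assert (Nat.gcd p a = p) by lia. rewrite H0 in H2. exact H2. Qed.

Lemma coprime_div_l a b c : Nat.gcd a b = 1 -> Nat.divide c a -> Nat.gcd c b = 1.
Proof. intros H Hc. apply Nat.divide_1_r. rewrite <- H.
  apply Nat.gcd_greatest. - eapply Nat.divide_trans; [apply Nat.gcd_divide_l|exact Hc].
  - apply Nat.gcd_divide_r. Qed.

Lemma coprime_div_r a b c : Nat.gcd a b = 1 -> Nat.divide c b -> Nat.gcd a c = 1.
Proof. intros H Hc. rewrite Nat.gcd_comm. apply (coprime_div_l b a c); auto.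
  rewrite Nat.gcd_comm; auto. Qed.

Lemma coprime_mul_l a b c : Nat.gcd a c = 1 -> Nat.gcd b c = 1 -> Nat.gcd (a*b) c = 1.
Proof. intros Ha Hb. set (g := Nat.gcd (a*b) c).
  assert (Hga : Nat.gcd g a = 1).
  { rewrite Nat.gcd_comm. apply (coprime_div_r a c g); auto. apply Nat.gcd_divide_r. }
  assert (Hgb : Nat.divide g b). { apply (Nat.gauss g a b); auto. apply Nat.gcd_divide_l. }
  apply Nat.divide_1_r. rewrite <- Hb. apply Nat.gcd_greatest; auto. apply Nat.gcd_divide_r. Qed.

Lemma coprime_mul_r a b c : Nat.gcd c a = 1 -> Nat.gcd c b = 1 -> Nat.gcd c (a*b) = 1.
Proof. intros. rewrite Nat.gcd_comm. apply coprime_mul_l; rewrite Nat.gcd_comm; auto. Qed.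

Lemma gcd_mul_cop x y a : Nat.divide x a -> Nat.gcd y a = 1 -> Nat.gcd (x*y) a = x.
Proof. intros [a' ->] H. rewrite (Nat.mul_comm a' x), Nat.gcd_mul_mono_l.
  assert (Nat.gcd y a' = 1) by (apply (coprime_div_r y (a'*x) a'); [auto| exists x; lia]).
  rewrite H0. lia. Qed.

Lemma split_div a b k : Nat.gcd a b = 1 -> Nat.divide k (a*b) -> k <> 0 ->
  k = Nat.gcd k a * Nat.gcd k b.
Proof. intros Hab Hk Hk0.
  set (g1 := Nat.gcd k a). set (g2 := Nat.gcd k b).
  assert (Hg1 : g1 <> 0) by (unfold g1; intros H; apply Nat.gcd_eq_0 in H; lia).
  destruct (Nat.gcd_divide_l k a) as [k1 Hk1]. fold g1 in Hk1.
  destruct (Nat.gcd_divide_r k a) as [a1 Ha1]. fold g1 in Ha1.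
  assert (Hc : Nat.gcd k1 a1 = 1).
  { assert (g1 = Nat.gcd k1 a1 * g1).
    { unfold g1 at 1. rewrite Hk1, Ha1 at 1. rewrite Nat.gcd_mul_mono_r. reflexivity. }
    nia. }
  assert (Hk1b : Nat.divide k1 b).
  { apply (Nat.gauss k1 a1 b); auto.
    apply (Nat.mul_divide_cancel_r _ _ g1); auto.
    rewrite <- Hk1. replace (a1 * b * g1) with (a*b) by (rewrite Ha1; ring). exact Hk. }
  assert (H1 : Nat.divide k1 g2).
  { apply Nat.gcd_greatest; auto. exists g1. lia. }
  assert (H2 : Nat.divide g2 k1).
  { apply (Nat.gauss g2 g1 k1).
    - rewrite Nat.mul_comm, <- Hk1. apply Nat.gcd_divide_l.
    - apply (coprime_div_l b g1); [|apply Nat.gcd_divide_r].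
      apply (coprime_div_r b a g1); [rewrite Nat.gcd_comm; auto|apply Nat.gcd_divide_r]. }
  pose proof (Nat.divide_antisym _ _ H1 H2). lia. Qed.

Lemma in_divisors n k : 1 <= n -> (In k (divisors_list n) <-> k <> 0 /\ Nat.divide k n).
Proof. intros Hn. unfold divisors_list. rewrite filter_In, in_seq, Nat.eqb_eq. split.
  - intros [H1 H2]. split; [lia|]. apply Nat.mod_divide; [lia|auto].
  - intros [H1 H2]. split.
    + apply Nat.divide_pos_le in H2; lia.
    + apply Nat.mod_divide; auto. Qed.

Lemma divisors_NoDup n : NoDup (divisors_list n).
Proof. apply NoDup_filter, seq_NoDup. Qed.

Lemma prime_div_pow q p a : nprime q -> nprime p -> Nat.divide q (p^a) -> q = p.
Proof. intros Hq Hp. induction a as [|a IH]; simpl; intros H.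
  - apply Nat.divide_1_r in H. apply nprime_ge2 in Hq. lia.
  - destruct (nprime_mult _ _ _ Hq H). + apply nprime_div_prime; auto. + auto. Qed.

Lemma pow_divisors p a x : nprime p -> Nat.divide x (p^a) -> exists i, i <= a /\ x = p^i.
Proof. intros Hp. revert x. induction a as [|a IH]; intros x H.
  - simpl in H. apply Nat.divide_1_r in H. exists 0. simpl. lia.
  - assert (Hp0 : p <> 0) by (apply nprime_ge2 in Hp; lia).
    assert (Hdec : Nat.divide p x \/ ~ Nat.divide p x).
    { destruct (Nat.eq_dec (x mod p) 0) as [Hm|Hm]; [left|right].
      - apply Nat.mod_divide; auto. - intros Hd. apply Hm. apply Nat.mod_divide; auto. }
    destruct Hdec as [[x' ->]|Hn].
    + assert (Nat.divide x' (p^a)).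
      { simpl in H. apply (Nat.mul_divide_cancel_r _ _ p); auto.
        rewrite (Nat.mul_comm (p^a)). exact H. }
      destruct (IH _ H0) as [i [Hi ->]]. exists (S i). split; [lia|]. simpl. ring.
    + assert (Nat.divide x (p^a)).
      { apply (Nat.gauss x p). - simpl in H. exact H.
        - rewrite Nat.gcd_comm. apply nprime_coprime; auto. }
      destruct (IH _ H0) as [i [Hi ->]]. exists i. split; [lia|auto]. Qed.
Open Scope R_scope.

Definition T (m k : nat) : C :=
  Csum (map (fun j => E (INR j * INR k / INR m))
    (filter (fun j => Nat.eqb (Nat.gcd j m) 1) (seq 1 m))).

Lemma ram_T m k : ramanujan_sum m (Z.of_nat k) = T m k.
Proof. unfold ramanujan_sum, T. apply Csum_ext. intros j _. unfold E.
  rewrite <- Nat2Z.inj_mul, <- INR_IZR_INZ, mult_INR. f_equal. unfold Rdiv. ring. Qed.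

Lemma seq_shift_add a c n : seq (a + c) n = map (fun i => (i + c)%nat) (seq a n).
Proof. revert a. induction n as [|n IH]; intros a; simpl. - reflexivity.
  - f_equal. rewrite <- IH. f_equal. Qed.

Lemma block_sum q m (F : nat -> C) :
  Csum (map F (seq 1 (q*m))) =
  Csum (map (fun t => Csum (map (fun i => F (i + t*m)%nat) (seq 1 m))) (seq 0 q)).
Proof. induction q as [|q IH]. - simpl. reflexivity.
  - replace (S q * m)%nat with (q*m + m)%nat by lia.
    rewrite seq_app, map_app, Csum_app, IH, seq_S, map_app, Csum_app.
    rewrite (seq_shift_add 1 (q*m) m), map_map. simpl. ring. Qed.

Lemma div_sum q m (F : nat -> C) : (1 <= q)%nat ->
  Csum (map (fun j => if Nat.eqb (j mod q) 0 then F j else RtoC 0) (seq 1 (q*m))) =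
  Csum (map (fun i => F (q*i)%nat) (seq 1 m)).
Proof. intros Hq. induction m as [|m IH]. - rewrite Nat.mul_0_r. reflexivity.
  - replace (q * S m)%nat with (q*m + (q - 1) + 1)%nat by lia.
    rewrite !seq_app, !map_app, !Csum_app, IH.
    rewrite (seq_S m 1), map_app, Csum_app.
    assert (H0 : Csum (map (fun j => if Nat.eqb (j mod q) 0 then F j else RtoC 0)
                 (seq (1 + q * m) (q - 1))) = RtoC 0).
    { rewrite (Csum_ext _ (fun _ => RtoC 0)). apply Csum_zero.
      intros j Hj. apply in_seq in Hj.
      replace (j mod q)%nat with (j - q*m)%nat.
      * destruct (Nat.eqb_spec (j - q*m) 0); [lia|reflexivity].
      * apply (Nat.mod_unique _ _ m); lia. }
    rewrite H0. unfold Csum. simpl.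
    replace (S (q * m + (q - 1))) with (q * S m)%nat by lia.
    replace (S m) with (m + 1)%nat by lia.
    replace ((q * (m+1)) mod q)%nat with 0%nat.
    + simpl. ring.
    + rewrite Nat.mul_comm. symmetry. apply Nat.Div0.mod_mul. Qed.

Lemma Csum_if {A} (c : bool) (f : A -> C) l :
  Csum (map (fun x => if c then f x else RtoC 0) l) = if c then Csum (map f l) else RtoC 0.
Proof. destruct c. - reflexivity. - apply Csum_zero. Qed.

Lemma gcd_qm q m j : nprime q ->
  Nat.eqb (Nat.gcd j (q*m)) 1 = andb (Nat.eqb (Nat.gcd j m) 1) (negb (Nat.eqb (j mod q) 0)).
Proof. intros Hq. pose proof (nprime_ge2 _ Hq) as Hq2.
  destruct (Nat.eqb_spec (Nat.gcd j (q*m)) 1) as [H|H].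
  - assert (Nat.gcd j m = 1%nat) by (apply (coprime_div_r j (q*m) m); auto; exists q; lia).
    destruct (Nat.eqb_spec (j mod q) 0) as [H1|H1]; [|rewrite H0; reflexivity].
    exfalso. apply Nat.mod_divide in H1; [|lia].
    assert (Nat.divide q 1). { rewrite <- H. apply Nat.gcd_greatest; auto. exists m; lia. }
    apply Nat.divide_1_r in H2. lia.
  - destruct (Nat.eqb_spec (Nat.gcd j m) 1) as [H0|H0]; [|reflexivity].
    destruct (Nat.eqb_spec (j mod q) 0) as [H1|H1]; [reflexivity|].
    exfalso. apply H. apply coprime_mul_r; auto.
    rewrite Nat.gcd_comm. apply nprime_coprime; auto.
    intros Hd. apply H1. apply Nat.mod_divide; auto. lia. Qed.

Lemma T_rec q m k : nprime q -> (1 <= m)%nat -> Nat.gcd q m = 1%nat ->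
  T (q*m) k = Cminus (if Nat.eqb (k mod q) 0 then Cmult (RtoC (INR q)) (T m (k / q)) else RtoC 0)
                     (T m k).
Proof. intros Hq Hm Hqm. pose proof (nprime_ge2 _ Hq) as Hq2.
  assert (HqR : INR q <> 0) by (apply not_0_INR; lia).
  assert (HmR : INR m <> 0) by (apply not_0_INR; lia).
  unfold T at 1. rewrite Csum_filter.
  set (G := fun j => if Nat.eqb (Nat.gcd j m) 1 then E (INR j * INR k / INR (q*m)) else RtoC 0).
  rewrite (Csum_ext _ (fun j => Cminus (G j) (if Nat.eqb (j mod q) 0 then G j else RtoC 0))).
  2:{ intros j _. rewrite gcd_qm by auto. unfold G.
      destruct (Nat.gcd j m =? 1)%nat, (j mod q =? 0)%nat; simpl; ring. }
  rewrite Csum_minus. f_equal.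
  -
    rewrite block_sum.
    rewrite (Csum_ext _ (fun t => Csum (map (fun i => if Nat.eqb (Nat.gcd i m) 1 then
               E (INR i * INR k / INR (q*m) + INR t * INR k / INR q) else RtoC 0) (seq 1 m)))).
    2:{ intros t _. apply Csum_ext. intros i _. unfold G.
        rewrite Nat.gcd_comm, Nat.gcd_add_mult_diag_r, Nat.gcd_comm.
        f_equal. f_equal. rewrite !plus_INR, !mult_INR. destruct (Nat.gcd i m =? 1)%nat; [|reflexivity]. f_equal. field. auto. }
    rewrite Csum_swap.
    rewrite (Csum_ext _ (fun i => if Nat.eqb (Nat.gcd i m) 1 then
         (if Nat.eqb (k mod q) 0 then Cmult (RtoC (INR q)) (E (INR i * INR k / INR (q*m))) else RtoC 0)
         else RtoC 0)).
    2:{ intros i _. rewrite Csum_if. rewrite E_geom by lia. reflexivity. }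
    destruct (Nat.eqb_spec (k mod q) 0) as [Hk|Hk].
    + unfold T. rewrite Csum_filter, <- Csum_scal. apply Csum_ext. intros i _.
      apply Nat.mod_divide in Hk; [|lia]. destruct Hk as [c ->].
      rewrite Nat.div_mul by lia.
      destruct (Nat.gcd i m =? 1)%nat; [|ring]. f_equal. f_equal.
      rewrite !mult_INR. field. auto.
    + rewrite (Csum_ext _ (fun _ => RtoC 0)). apply Csum_zero.
      intros i _. destruct (Nat.gcd i m =? 1)%nat; reflexivity.
  -
    rewrite div_sum by lia. unfold T. rewrite Csum_filter. apply Csum_ext. intros i _.
    unfold G.
    replace (Nat.gcd (q*i) m =? 1)%nat with (Nat.gcd i m =? 1)%nat.
    + destruct (Nat.gcd i m =? 1)%nat; [|reflexivity]. f_equal. rewrite !mult_INR. field. auto.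
    + destruct (Nat.eqb_spec (Nat.gcd i m) 1) as [H|H]; destruct (Nat.eqb_spec (Nat.gcd (q*i) m) 1) as [H'|H']; auto.
      * exfalso. apply H'. apply coprime_mul_l; auto.
      * exfalso. apply H. apply (coprime_div_l (q*i) m i); auto. exists q. lia.
Qed.
Open Scope R_scope.

Definition Rprod (l : list R) : R := fold_right Rmult 1 l.
Definition phiR (q k : nat) : R := if Nat.eqb (k mod q) 0 then INR q - 1 else -1.

Lemma T1 k : T 1 k = RtoC 1.
Proof. unfold T. simpl. replace (1 * INR k / 1) with (0 + INR k) by (field).
  rewrite E_int, E_0. ring. Qed.

Lemma prod_notdiv (p e : nat -> nat) q L : nprime q ->
  (forall l, In l L -> nprime (p l) /\ p l <> q) ->
  ~ Nat.divide q (nprod (map (fun l => p l ^ e l) L))%nat.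
Proof. intros Hq. induction L as [|a L IH]; intros HL; simpl.
  - intros H. apply Nat.divide_1_r in H. apply nprime_ge2 in Hq. lia.
  - intros H. destruct (nprime_mult _ _ _ Hq H) as [H1|H1].
    + destruct (HL a (or_introl eq_refl)) as [Ha Hne].
      apply Hne. symmetry. apply (prime_div_pow q (p a) (e a)); auto.
    + apply IH; auto. intros l Hl. apply HL. right. auto. Qed.

Lemma nprod_pos (f : nat -> nat) L : (forall l, In l L -> f l <> 0%nat) ->
  (1 <= nprod (map f L))%nat.
Proof. induction L as [|a L IH]; intros H; simpl. - lia.
  - assert (f a <> 0%nat) by (apply H; left; auto).
    assert (1 <= nprod (map f L))%nat by (apply IH; intros; apply H; right; auto). nia. Qed.

Lemma div_shift q r k : nprime q -> nprime r -> q <> r -> Nat.divide q k ->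
  Nat.eqb ((k / q) mod r) 0 = Nat.eqb (k mod r) 0.
Proof. intros Hq Hr Hne [c ->]. pose proof (nprime_ge2 _ Hq). pose proof (nprime_ge2 _ Hr).
  rewrite Nat.div_mul by lia.
  destruct (Nat.eqb_spec (c mod r) 0) as [H1|H1]; destruct (Nat.eqb_spec ((c*q) mod r) 0) as [H2|H2]; auto.
  - exfalso. apply H2. apply Nat.mod_divide in H1; [|lia]. apply Nat.mod_divide; [lia|].
    apply Nat.divide_mul_l. auto.
  - exfalso. apply Nat.mod_divide in H2; [|lia]. destruct (nprime_mult _ _ _ Hr H2) as [H3|H3].
    + apply H1. apply Nat.mod_divide; auto. lia.
    + apply Hne. symmetry. apply nprime_div_prime; auto. Qed.

Lemma T_formula (p beta : nat -> nat) L :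
  NoDup L -> (forall l, In l L -> nprime (p l) /\ (beta l <= 1)%nat) ->
  (forall l l', In l L -> In l' L -> p l = p l' -> l = l') ->
  forall k, T (nprod (map (fun l => p l ^ beta l) L))%nat k =
    RtoC (Rprod (map (fun l => if Nat.eqb (beta l) 1 then phiR (p l) k else 1) L)).
Proof. induction L as [|a L IH]; intros Hnd HL Hinj k.
  - simpl. apply T1.
  - inversion Hnd as [|a' L' Hnotin Hnd' E1]. subst.
    assert (IH' := IH Hnd' (fun l Hl => HL l (or_intror Hl))
                      (fun l l' Hl Hl' => Hinj l l' (or_intror Hl) (or_intror Hl'))).
    destruct (HL a (or_introl eq_refl)) as [Hpa Hba].
    assert (Hne : forall l, In l L -> nprime (p l) /\ p l <> p a).
    { intros l Hl. split. - apply HL. right. auto.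
      - intros Heq. apply Hnotin. rewrite <- (Hinj l a); auto. right; auto. left; auto. }
    set (m := nprod (map (fun l => p l ^ beta l) L)%nat) in *.
    assert (Hm : (1 <= m)%nat).
    { apply nprod_pos. intros l Hl. apply Nat.pow_nonzero. destruct (HL l (or_intror Hl)) as [H _].
      apply nprime_ge2 in H. lia. }
    simpl. fold m.
    destruct (beta a) as [|[|b]] eqn:Hb; [| |lia].
    + simpl. rewrite Nat.add_0_r. rewrite IH'. rewrite Rmult_1_l. reflexivity.
    + simpl (p a ^ 1)%nat. rewrite Nat.mul_1_r. simpl Nat.eqb. cbv iota.
      rewrite T_rec; auto.
      2:{ apply nprime_coprime; auto. apply prod_notdiv; auto. }
      rewrite !IH'. unfold phiR at 1.
      pose proof (nprime_ge2 _ Hpa).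
      destruct (Nat.eqb_spec (k mod p a) 0) as [Hk|Hk].
      * rewrite (map_ext_in _ (fun l => if Nat.eqb (beta l) 1 then phiR (p l) k else 1)).
        -- set (P := Rprod _). rewrite <- RtoC_mult, <- RtoC_minus. f_equal.
           unfold phiR. replace (k mod p a =? 0)%nat with true by (symmetry; apply Nat.eqb_eq; auto). ring.
        -- intros l Hl. destruct (Nat.eqb (beta l) 1); [|reflexivity].
           unfold phiR. rewrite div_shift; auto.
           ++ apply Hne; auto.
           ++ intros Heq. apply (proj2 (Hne l Hl)). auto.
           ++ apply Nat.mod_divide; auto. lia.
      * set (P := Rprod _). replace (Cminus (RtoC 0) (RtoC P)) with (RtoC (- P)) by (rewrite RtoC_opp; ring).
        f_equal. unfold phiR. replace (k mod p a =? 0)%nat with false by (symmetry; apply Nat.eqb_neq; auto). ring.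
Qed.
Open Scope R_scope.

Lemma cpow_mult a b z : 0 < a -> 0 < b -> cpow (a*b) z = Cmult (cpow a z) (cpow b z).
Proof. intros Ha Hb. unfold cpow, Cmult. simpl. rewrite ln_mult by auto.
  rewrite !Rmult_plus_distr_l, exp_plus, cos_plus, sin_plus. f_equal; ring. Qed.

Lemma cpow_1 z : cpow 1 z = RtoC 1.
Proof. unfold cpow. rewrite ln_1, !Rmult_0_r, exp_0, cos_0, sin_0. unfold RtoC. f_equal; ring. Qed.

Lemma cpow_0 a : cpow a (RtoC 0) = RtoC 1.
Proof. unfold cpow. simpl. rewrite !Rmult_0_l, exp_0, cos_0, sin_0. unfold RtoC. f_equal; ring. Qed.

Lemma cpow_nz a z : cpow a z <> RtoC 0.
Proof. unfold cpow. intros H. injection H as H1 H2.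
  pose proof (exp_pos (Re z * ln a)).
  apply Rmult_integral in H1. apply Rmult_integral in H2.
  pose proof (sin2_cos2 (Im z * ln a)). unfold Rsqr in H0.
  destruct H1, H2; try lra. rewrite H1, H2 in H0. lra. Qed.

Lemma Cinv_mult' a b : a <> RtoC 0 -> b <> RtoC 0 -> Cinv (Cmult a b) = Cmult (Cinv a) (Cinv b).
Proof. intros Ha Hb. field. split; auto. Qed.

Lemma Rprod_pos (f : nat -> R) L : (forall l, In l L -> 0 < f l) -> 0 < Rprod (map f L).
Proof. induction L as [|a L IH]; intros H; simpl. - lra.
  - apply Rmult_lt_0_compat. + apply H; left; auto. + apply IH; intros; apply H; right; auto. Qed.

Lemma Cinv_cpow_prod (f : nat -> R) L z : (forall l, In l L -> 0 < f l) ->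
  Cinv (cpow (Rprod (map f L)) z) = Cprod (map (fun l => Cinv (cpow (f l) z)) L).
Proof. induction L as [|a L IH]; intros H; simpl.
  - rewrite cpow_1. unfold Cinv, RtoC. simpl. f_equal; field.
  - assert (0 < Rprod (map f L)).
    { apply Rprod_pos. intros; apply H; right; auto. }
    rewrite cpow_mult; auto. 2: apply H; left; auto.
    rewrite Cinv_mult' by apply cpow_nz. rewrite IH; auto. intros; apply H; right; auto. Qed.

Lemma Rabs_prod (f : nat -> R) L : Rabs (Rprod (map f L)) = Rprod (map (fun l => Rabs (f l)) L).
Proof. induction L as [|a L IH]; simpl. - apply Rabs_R1. - rewrite Rabs_mult, IH. reflexivity. Qed.
Open Scope R_scope.

Lemma NoDup_map_inj {A B} (f : A -> B) l :
  (forall a b, In a l -> In b l -> f a = f b -> a = b) -> NoDup l -> NoDup (map f l).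
Proof. intros H Hl. apply NoDup_map_NoDup_ForallPairs; auto. Qed.

Lemma divisors_pow p a : nprime p ->
  Permutation (divisors_list (p^a)) (map (fun i => p^i)%nat (seq 0 (S a))).
Proof. intros Hp. pose proof (nprime_ge2 _ Hp).
  assert (Hpa : (1 <= p^a)%nat) by (pose proof (Nat.pow_nonzero p a); lia).
  apply NoDup_Permutation.
  - apply divisors_NoDup.
  - apply NoDup_map_inj; [|apply seq_NoDup]. intros i j _ _ Hij. apply Nat.pow_inj_r in Hij; lia.
  - intros x. rewrite in_divisors by auto. rewrite in_map_iff. split.
    + intros [Hx Hd]. destruct (pow_divisors _ _ _ Hp Hd) as [i [Hi ->]].
      exists i. split; auto. apply in_seq. lia.
    + intros [i [<- Hi]]. apply in_seq in Hi. split.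
      * apply Nat.pow_nonzero. lia.
      * exists (p^(a-i))%nat. rewrite <- Nat.pow_add_r. f_equal. lia. Qed.

Lemma NoDup_flat_mul lA lB :
  NoDup lA -> NoDup lB -> (forall x, In x lA -> x <> 0%nat) ->
  (forall x x' y y', In x lA -> In x' lA -> In y lB -> In y' lB -> (x*y = x'*y')%nat -> x = x') ->
  NoDup (flat_map (fun x => map (fun y => (x*y)%nat) lB) lA).
Proof. induction lA as [|a lA IH]; intros HA HB Hnz Hinj; simpl. - constructor.
  - inversion HA; subst. apply NoDup_app.
    + apply NoDup_map_inj; auto. intros y y' _ _ Hy.
      assert (a <> 0%nat) by (apply Hnz; left; auto). nia.
    + apply IH; auto. * intros; apply Hnz; right; auto.
      * intros x x' y y' Hx Hx' Hy Hy' E0. apply (Hinj x x' y y'); auto; right; auto.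
    + intros k Hk1 Hk2. apply in_map_iff in Hk1. destruct Hk1 as [y [<- Hy]].
      apply in_flat_map in Hk2. destruct Hk2 as [x' [Hx' Hk2]].
      apply in_map_iff in Hk2. destruct Hk2 as [y' [E0 Hy']].
      assert (a = x') by (apply (Hinj a x' y y'); [left|right| | |]; auto).
      subst. contradiction. Qed.

Lemma divisors_mul A B : (1 <= A)%nat -> (1 <= B)%nat -> Nat.gcd A B = 1%nat ->
  Permutation (divisors_list (A*B))
    (flat_map (fun x => map (fun y => (x*y)%nat) (divisors_list B)) (divisors_list A)).
Proof. intros HA HB Hab. apply NoDup_Permutation.
  - apply divisors_NoDup.
  - apply NoDup_flat_mul; try apply divisors_NoDup.
    + intros x Hx. apply in_divisors in Hx; auto. tauto.
    + intros x x' y y' Hx Hx' Hy Hy' E0.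
      apply in_divisors in Hx, Hx', Hy, Hy'; auto.
      assert (Hy1 : Nat.gcd y A = 1%nat).
      { rewrite Nat.gcd_comm. apply (coprime_div_r A B y); auto. tauto. }
      assert (Hy1' : Nat.gcd y' A = 1%nat).
      { rewrite Nat.gcd_comm. apply (coprime_div_r A B y'); auto. tauto. }
      rewrite <- (gcd_mul_cop x y A), <- (gcd_mul_cop x' y' A); try tauto. rewrite E0. reflexivity.
  - intros k. rewrite in_divisors by nia. rewrite in_flat_map. split.
    + intros [Hk Hd]. exists (Nat.gcd k A). split.
      * apply in_divisors; auto. split.
        -- intros H0. apply Nat.gcd_eq_0 in H0. lia.
        -- apply Nat.gcd_divide_r.
      * apply in_map_iff. exists (Nat.gcd k B). split.
        -- symmetry. apply split_div; auto.
        -- apply in_divisors; auto. split.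
           ++ intros H0. apply Nat.gcd_eq_0 in H0. lia.
           ++ apply Nat.gcd_divide_r.
    + intros [x [Hx Hk]]. apply in_map_iff in Hk. destruct Hk as [y [<- Hy]].
      apply in_divisors in Hx, Hy; auto. destruct Hx as [Hx [a Ha]], Hy as [Hy [b Hb]].
      split. * nia. * exists (a*b)%nat. subst. ring. Qed.

Lemma mod_mul_l r x y : nprime r -> ~ Nat.divide r x ->
  Nat.eqb ((x*y) mod r) 0 = Nat.eqb (y mod r) 0.
Proof. intros Hr Hx. pose proof (nprime_ge2 _ Hr).
  destruct (Nat.eqb_spec (y mod r) 0) as [H1|H1]; destruct (Nat.eqb_spec ((x*y) mod r) 0) as [H2|H2]; auto.
  - exfalso. apply H2. apply Nat.mod_divide in H1; [|lia]. apply Nat.mod_divide; [lia|].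
    apply Nat.divide_mul_r. auto.
  - exfalso. apply Nat.mod_divide in H2; [|lia]. destruct (nprime_mult _ _ _ Hr H2) as [H3|H3].
    + auto. + apply H1. apply Nat.mod_divide; auto. lia. Qed.

Lemma coprime_pow_l a n c : Nat.gcd a c = 1%nat -> Nat.gcd (a^n) c = 1%nat.
Proof. intros H. induction n as [|n IH]; simpl. - reflexivity. - apply coprime_mul_l; auto. Qed.

Lemma div_sum_main (p alpha : nat -> nat) (g : nat -> bool -> C) L :
  NoDup L -> (forall l, In l L -> nprime (p l) /\ (1 <= alpha l)%nat) ->
  (forall l l', In l L -> In l' L -> p l = p l' -> l = l') ->
  Csum (map (fun k => Cprod (map (fun l => g l (Nat.eqb (k mod p l) 0)) L))
            (divisors_list (nprod (map (fun l => p l ^ alpha l) L))%nat))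
  = Cprod (map (fun l => Cplus (g l false) (Cmult (RtoC (INR (alpha l))) (g l true))) L).
Proof. induction L as [|a L IH]; intros Hnd HL Hinj.
  - simpl. ring.
  - inversion Hnd as [|a' L' Hnotin Hnd' E1]. subst.
    assert (IH' := IH Hnd' (fun l Hl => HL l (or_intror Hl))
                      (fun l l' Hl Hl' => Hinj l l' (or_intror Hl) (or_intror Hl'))).
    destruct (HL a (or_introl eq_refl)) as [Hpa Hal]. pose proof (nprime_ge2 _ Hpa).
    assert (Hne : forall l, In l L -> nprime (p l) /\ p l <> p a).
    { intros l Hl. split. - apply HL. right. auto.
      - intros Heq. apply Hnotin. rewrite <- (Hinj l a); auto. right; auto. left; auto. }
    set (B := nprod (map (fun l => p l ^ alpha l) L)%nat) in *.
    assert (HB : (1 <= B)%nat).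
    { apply nprod_pos. intros l Hl. apply Nat.pow_nonzero. destruct (HL l (or_intror Hl)) as [H0 _].
      apply nprime_ge2 in H0. lia. }
    assert (HnB : ~ Nat.divide (p a) B) by (apply prod_notdiv; auto).
    simpl (nprod _). fold B.
    rewrite (Csum_perm _ _ _ (divisors_mul (p a ^ alpha a) B ltac:(pose proof (Nat.pow_nonzero (p a) (alpha a)); lia) HB
               ltac:(apply coprime_pow_l; apply nprime_coprime; auto))).
    rewrite Csum_flat_map.
    set (c := fun x : nat => g a (Nat.eqb (x mod p a) 0)).
    set (P := fun y : nat => Cprod (map (fun l => g l (Nat.eqb (y mod p l) 0)) L)).
    rewrite (Csum_ext _ (fun x => Cmult (Csum (map P (divisors_list B))) (c x))).
    2:{ intros x Hx. rewrite map_map. rewrite Cmult_comm, <- Csum_scal. apply Csum_ext.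
        intros y Hy. apply in_divisors in Hx; [|pose proof (Nat.pow_nonzero (p a) (alpha a)); lia].
        apply in_divisors in Hy; auto. simpl. unfold c, P. f_equal.
        - rewrite Nat.mul_comm. rewrite mod_mul_l; auto.
          intros Hd. apply HnB. eapply Nat.divide_trans; [exact Hd|tauto].
        - apply Cprod_ext. intros l Hl. rewrite mod_mul_l; auto. apply Hne; auto.
          intros Hd. apply (proj2 (Hne l Hl)). apply (prime_div_pow _ _ (alpha a)); auto.
          apply Hne; auto. eapply Nat.divide_trans; [exact Hd|tauto]. }
    rewrite Csum_scal. unfold P. rewrite IH'. cbn [map Cprod fold_right]. unfold Cprod. rewrite Cmult_comm. f_equal.
    rewrite (Csum_perm _ _ _ (divisors_pow _ _ Hpa)).
    rewrite map_map. simpl seq. simpl map. simpl Csum. unfold c at 1.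
    f_equal.
    { replace (1 mod p a)%nat with 1%nat by (rewrite Nat.mod_small; lia). reflexivity. }
    rewrite (Csum_ext _ (fun _ => g a true)).
    + rewrite Csum_const, length_seq. reflexivity.
    + intros i Hi. apply in_seq in Hi. unfold c.
      replace ((p a ^ i) mod p a)%nat with 0%nat. reflexivity.
      replace i with (S (i - 1)) by lia. simpl. rewrite Nat.mul_comm. symmetry. apply Nat.Div0.mod_mul.
Qed.
Open Scope R_scope.

Lemma Cinv1 : Cinv (RtoC 1) = RtoC 1.
Proof. unfold Cinv, RtoC. simpl. f_equal; field. Qed.

Theorem mainTheorem10
  (n d r : nat) (p alpha beta : nat -> nat)
  (Hprime : forall l, (l < r)%nat -> prime (Z.of_nat (p l)))
  (Hdistinct : forall l l', (l < r)%nat -> (l' < r)%nat -> p l = p l' -> l = l')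
  (Halpha : forall l, (l < r)%nat -> (1 <= alpha l)%nat)
  (Hbeta : forall l, (l < r)%nat -> (beta l <= 1)%nat)
  (Hn : n = nprod (map (fun l => p l ^ alpha l) (seq 0 r))%nat)
  (Hd : d = nprod (map (fun l => p l ^ beta l) (seq 0 r))%nat)
  (z : C) :
  Csum (map (fun k => Cinv (cpow (Cmod (ramanujan_sum d (Z.of_nat k))) z))
            (divisors_list n))
  = Cprod (map (fun l =>
        Cplus (RtoC 1)
          (Cdiv (RtoC (INR (alpha l)))
                (cpow (INR (p l - 1)) (Cmult (RtoC (INR (beta l))) z))))
        (seq 0 r)).
Proof.
  set (L := seq 0 r).
  assert (HinL : forall l, In l L <-> (l < r)%nat) by (intros l; unfold L; rewrite in_seq; lia).
  assert (HndL : NoDup L) by apply seq_NoDup.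
  set (g := fun l (b : bool) => if andb b (Nat.eqb (beta l) 1)
                                then Cinv (cpow (INR (p l) - 1) z) else RtoC 1).
  rewrite (Csum_ext _ (fun k => Cprod (map (fun l => g l (Nat.eqb (k mod p l) 0)) L))).
  2:{ intros k _. rewrite ram_T. subst d. fold L.
      rewrite (T_formula p beta L HndL).
      2:{ intros l Hl. apply HinL in Hl. split; [apply Hprime|apply Hbeta]; auto. }
      2:{ intros l l' Hl Hl'. apply HinL in Hl, Hl'. auto. }
      rewrite Cmod_R, Rabs_prod, Cinv_cpow_prod.
      - apply Cprod_ext. intros l Hl. apply HinL in Hl. unfold g.
        pose proof (nprime_ge2 _ (Hprime l Hl)) as Hp2.
        assert (HpR : 2 <= INR (p l)) by (replace 2 with (INR 2) by (simpl; ring); apply le_INR; auto).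
        destruct (Nat.eqb (beta l) 1); unfold phiR.
        + destruct (Nat.eqb (k mod p l) 0); simpl andb.
          * rewrite Rabs_right by lra. reflexivity.
          * replace (Rabs (-1)) with 1 by (unfold Rabs; destruct Rcase_abs; lra). rewrite cpow_1. apply Cinv1.
        + rewrite Bool.andb_false_r, Rabs_R1, cpow_1. apply Cinv1.
      - intros l Hl. apply HinL in Hl.
        pose proof (nprime_ge2 _ (Hprime l Hl)) as Hp2.
        assert (HpR : 2 <= INR (p l)) by (replace 2 with (INR 2) by (simpl; ring); apply le_INR; auto).
        destruct (Nat.eqb (beta l) 1); unfold phiR; [destruct (Nat.eqb (k mod p l) 0)|];
          [rewrite Rabs_right by lra; lra | unfold Rabs; destruct Rcase_abs; lra | rewrite Rabs_R1; lra]. }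
  subst n. fold L. rewrite (div_sum_main p alpha g L HndL).
  2:{ intros l Hl. apply HinL in Hl. split; [apply Hprime|apply Halpha]; auto. }
  2:{ intros l l' Hl Hl'. apply HinL in Hl, Hl'. auto. }
  apply Cprod_ext. intros l Hl. apply HinL in Hl. unfold g. simpl andb.
  pose proof (nprime_ge2 _ (Hprime l Hl)) as Hp2.
  f_equal. unfold Cdiv. f_equal.
  assert (Hb := Hbeta l Hl).
  destruct (beta l) as [|[|b]] eqn:Hbl; [| |lia]; simpl Nat.eqb; cbv iota.
  - simpl INR. rewrite Cmult_0_l, cpow_0, Cinv1. reflexivity.
  - rewrite minus_INR by lia. simpl INR. rewrite Cmult_1_l. reflexivity.
Qed.
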